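(* Let $f(x) = x^5 + a_4x^4 + a_3x^3 + a_2x^2 + a_1x + a_0$ be a real polynomial. Define $u_2 = \frac{3}{10}a_3 - \frac{3}{25}a_4^2$, $u_3 = \frac{2}{125}a_4^3 - \frac{3}{50}a_3a_4 + \frac{1}{10}a_2$, $u_4 = -\frac{3}{625}a_4^4 + \frac{3}{125}a_4^2a_3 - \frac{2}{25}a_4a_2 + \frac15 a_1$. If $u_3 = 0$, for $i_1,i_2 \in \{+1,-1\}$ let $x_{i_1,i_2} = i_1\sqrt{-u_2 + i_2\sqrt{u_2^2 - u_4}}$. If $u_3 \neq 0$, let $v_2 = -\frac{u_2^2}{3} - u_4$, $v_3 = \frac{2u_2u_4}{3} - \frac{2u_2^3}{27} - 2u_3^2$, let $C$ be a complex third root of $-v_3$ if $v_2 = 0$ and of $\frac12\left(-v_3 + \sqrt{v_3^2 + \frac{4}{27}v_2^3}\right)$ if $v_2 \neq 0$, let $y = C - \frac{v_2}{3C} - \frac{2u_2}{3}$, and let $x_{i_1,i_2} = \frac{i_1\sqrt{2y} + i_2\sqrt{-4u_2 - 2y - i_1\frac{8u_3}{\sqrt{2y}}}}{2}$. Then the four numbers $x_{i_1,i_2} - \frac{a_4}{5}$, $i_1,i_2 \in \{+1,-1\}$, are the four roots of $f'(x)$. Assume they are real, sort them as $\beta_4 \leq \beta_3 \leq \beta_2 \leq \beta_1$, let $F(x) = x^5 + a_4x^4 + a_3x^3 + a_2x^2 + a_1x$ (so $f = F + a_0$), and set $\lambda_1 = \max\{F(\beta_1),F(\beta_3)\}$,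 $\lambda_2 = \min\{F(\beta_2),F(\beta_4)\}$. Consider $(\dagger\dagger\dagger)$: $-\lambda_2 \leq a_0 \leq -\lambda_1$. Then: (1) all complex roots of $f(x)$ are real and non-negative if and only if all complex roots of $f'(x)$ are real and non-negative, $a_0 \leq 0$ and $(\dagger\dagger\dagger)$ holds; (2) all complex roots of $f(x)$ are real and positive if and only if all complex roots of $f'(x)$ are real and positive, $a_0 < 0$ and $(\dagger\dagger\dagger)$ holds.
   Context: Square roots and third roots appearing above denote arbitrary complex roots (the resulting set of four numbers $x_{i_1,i_2}$ does not depend on these choices). *)

(* Defs.v *)
From HB Require Import structures.
From mathcomp Require Import all_boot all_order all_algebra.
From mathcomp Require Import complex.
From mathcomp Require Import reals.
Set Implicit Arguments. Unset Strict Implicit. Unset Printing Implicit Defensive.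
Import Order.TTheory GRing.Theory Num.Theory.
Local Open Scope ring_scope.

Definition sgb {K : ringType} (b : bool) : K := if b then 1 else -1.

Definition quint {R : ringType} (a4 a3 a2 a1 a0 : R) : {poly R} :=
  'X^5 + a4 *: 'X^4 + a3 *: 'X^3 + a2 *: 'X^2 + a1 *: 'X + a0%:P.

Definition Fq {R : ringType} (a4 a3 a2 a1 : R) (x : R) : R :=
  x ^+ 5 + a4 * x ^+ 4 + a3 * x ^+ 3 + a2 * x ^+ 2 + a1 * x.

Section Aux.
Variable K : fieldType.
Variables a4 a3 a2 a1 : K.
Definition u2 : K := 3/10 * a3 - 3/25 * a4 ^+ 2.
Definition u3 : K := 2/125 * a4 ^+ 3 - 3/50 * a3 * a4 + 1/10 * a2.
Definition u4 : K := - (3/625) * a4 ^+ 4 + 3/125 * a4 ^+ 2 * a3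
                      - 2/25 * a4 * a2 + 1/5 * a1.
Definition v2 : K := - (u2 ^+ 2 / 3) - u4.
Definition v3 : K := 2 * u2 * u4 / 3 - 2 * u2 ^+ 3 / 27 - 2 * u3 ^+ 2.
(* the number whose cube root is taken, given a square root s of
   v3^2 + 4/27 v2^3 (only used when v2 != 0) *)
Definition cube_target (s : K) : K :=
  if v2 == 0 then - v3 else (- v3 + s) / 2.
Definition yres (C : K) : K := C - v2 / (3 * C) - 2 * u2 / 3.
End Aux.

Definition all_roots_real_nonneg (R : rcfType) (p : {poly R}) : Prop :=
  forall z : R[i], root (map_poly (real_complex R) p) z -> z \is Num.real /\ 0 <= z.
Definition all_roots_real_pos (R : rcfType) (p : {poly R}) : Prop :=
  forall z : R[i], root (map_poly (real_complex R) p) z -> z \is Num.real /\ 0 < z.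

(* Main.v *)
Require Import Defs.
From HB Require Import structures.
From mathcomp Require Import all_boot all_order all_algebra.
From mathcomp Require Import complex.
From mathcomp Require Import reals.
From mathcomp Require Import polyorder polyrcf.
From mathcomp Require Import ring lra zify.
Import Order.TTheory GRing.Theory Num.Theory.
Local Open Scope ring_scope.

Lemma deriv_quint (K : comNzRingType) (a4 a3 a2 a1 a0 : K) :
  deriv (quint a4 a3 a2 a1 a0) = 5%:P*'X^4 + (4*a4)%:P*'X^3 + (3*a3)%:P*'X^2 + (2*a2)%:P*'X + a1%:P.
Proof.
rewrite /quint !derivE -!mul_polyC.
rewrite !polyCM. ring.
Qed.

Lemma shift_gen (K : numFieldType) (a U2 U3 U4 : K) :
  5%:P * (('X + a%:P)^+4 + (2 * U2)%:P * ('X + a%:P)^+2 + (4 * U3)%:P * ('X + a%:P) + U4%:P) =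
  5%:P*'X^4 + (5*(4*a))%:P*'X^3 + (5*(6*a^+2 + 2*U2))%:P*'X^2
  + (5*(4*a^+3 + 4*U2*a + 4*U3))%:P*'X + (5*(a^+4 + 2*U2*a^+2 + 4*U3*a+U4))%:P :> {poly K}.
Proof. ring. Qed.

Lemma coefP4 (K : nzRingType) (c3 c2 c1 c0 d3 d2 d1 d0 : K) :
  c3 = d3 -> c2 = d2 -> c1 = d1 -> c0 = d0 ->
  5%:P*'X^4 + c3%:P*'X^3 + c2%:P*'X^2 + c1%:P*'X + c0%:P =
  5%:P*'X^4 + d3%:P*'X^3 + d2%:P*'X^2 + d1%:P*'X + d0%:P.
Proof. by move=> -> -> -> ->. Qed.

Lemma shift_eq (K : numFieldType) (A4 A3 A2 A1 : K) :
  5%:P*'X^4 + (4*A4)%:P*'X^3 + (3*A3)%:P*'X^2 + (2*A2)%:P*'X + A1%:P =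
  5%:P * (('X + (A4/5)%:P)^+4 + (2 * u2 A4 A3)%:P * ('X + (A4/5)%:P)^+2 + (4 * u3 A4 A3 A2)%:P * ('X + (A4/5)%:P) + (u4 A4 A3 A2 A1)%:P).
Proof.
rewrite shift_gen /u2 /u3 /u4.
by apply: coefP4; field; rewrite ?pnatr_eq0.
Qed.
Lemma prod1 (K : numFieldType) (a U2 U3 U4 s : K) (t : bool -> K) :
  U3 = 0 -> s^+2 = U2^+2 - U4 -> (forall i2, t i2 ^+ 2 = - U2 + sgb i2 * s) ->
  \prod_(i1 : bool) \prod_(i2 : bool) ('X - (sgb i1 * t i2 - a)%:P) =
  ('X + a%:P)^+4 + (2 * U2)%:P * ('X + a%:P)^+2 + (4 * U3)%:P * ('X + a%:P) + U4%:P.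
Proof.
move=> U30 hs ht.
rewrite !big_bool /sgb /=.
have -> : ('X - (1 * t true - a)%:P) * ('X - (1 * t false - a)%:P) *
   (('X - (-1 * t true - a)%:P) * ('X - (-1 * t false - a)%:P)) =
   (('X + a%:P)^+2 - (t true ^+2)%:P) * (('X + a%:P)^+2 - (t false ^+2)%:P) by ring.
rewrite !ht /sgb U30 (_ : U4 = U2^+2 - s^+2); last by rewrite hs; ring.
ring.
Qed.

Lemma prod2 (K : numFieldType) (a U2 U3 U4 y w : K) (r : bool -> K) :
  U3 != 0 -> y^+3 + 2 * U2 * y^+2 + (U2^+2 - U4) * y - 2 * U3^+2 = 0 ->
  w^+2 = 2 * y -> (forall i1, r i1 ^+ 2 = - 4 * U2 - 2 * y - sgb i1 * (8 * U3 / w)) ->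
  \prod_(i1 : bool) \prod_(i2 : bool) ('X - ((sgb i1 * w + sgb i2 * r i1) / 2 - a)%:P) =
  ('X + a%:P)^+4 + (2 * U2)%:P * ('X + a%:P)^+2 + (4 * U3)%:P * ('X + a%:P) + U4%:P.
Proof.
move=> U3n0 cub hw hr.
have y0 : y != 0.
  apply: contra U3n0 => /eqP y0.
  have e : -(2 * U3^+2) = y^+3 + 2 * U2 * y^+2 + (U2^+2 - U4) * y - 2 * U3^+2 by rewrite y0; ring.
  by move: e; rewrite cub => /eqP; rewrite oppr_eq0 mulf_eq0 pnatr_eq0 expf_eq0.
have w0 : w != 0.
  apply: contra y0 => /eqP w0; move: hw; rewrite w0 expr0n /= => /esym/eqP.
  by rewrite mulf_eq0 pnatr_eq0.
rewrite !big_bool /sgb /=.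
set h := w / 2.
set p := (r true / 2) ^+ 2.
set q := (r false / 2) ^+ 2.
have -> : ('X - ((1 * w + 1 * r true) / 2 - a)%:P) * ('X - ((1 * w + -1 * r true) / 2 - a)%:P) *
  (('X - ((-1 * w + 1 * r false) / 2 - a)%:P) * ('X - ((-1 * w + -1 * r false) / 2 - a)%:P)) =
  ('X + a%:P)^+4 + (h^+2 - q + h^+2 - p - 4 * h^+2)%:P * ('X + a%:P)^+2
   + (2 * h * (h^+2 - p) - 2 * h * (h^+2 - q))%:P * ('X + a%:P)
   + ((h^+2 - p) * (h^+2 - q))%:P.
  rewrite /h /p /q; ring.
have ep : p = r true ^+ 2 / 4 by rewrite /p; field.
have eq : q = r false ^+ 2 / 4 by rewrite /q; field.
have eh : h ^+ 2 = y / 2 by rewrite /h -[LHS]/((w / 2) ^+ 2) expr_div_n hw; field.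
rewrite ep eq eh !hr /sgb.
congr (_ + _ + _ + _); (try congr (_ * _)); f_equal.
- by field.
- by rewrite /h; field.
- transitivity ((y + U2)^+2 - 4 * U3^+2 / (w^+2)); first by field.
  rewrite hw; apply/eqP; rewrite -subr_eq0.
  rewrite (_ : _ - U4 = (y^+3 + 2 * U2 * y^+2 + (U2^+2 - U4) * y - 2 * U3^+2) / y).
    by rewrite cub mul0r.
  by field.
Qed.
Lemma cubic_ok (K : numFieldType) (A4 A3 A2 A1 s C : K) :
  let U2 := u2 A4 A3 in let U3 := u3 A4 A3 A2 in let U4 := u4 A4 A3 A2 A1 in
  let V2 := v2 A4 A3 A2 A1 in let V3 := v3 A4 A3 A2 A1 in
  s ^+ 2 = V3 ^+ 2 + 4/27 * V2 ^+ 3 ->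
  C ^+ 3 = cube_target A4 A3 A2 A1 s ->
  let y := yres A4 A3 A2 A1 C in
  y^+3 + 2 * U2 * y^+2 + (U2^+2 - U4) * y - 2 * U3^+2 = 0.
Proof.
move=> U2 U3 U4 V2 V3 hs hC y.
set z := C - V2 / (3 * C).
have -> : y^+3 + 2 * U2 * y^+2 + (U2^+2 - U4) * y - 2 * U3^+2 = z^+3 + V2 * z + V3.
  by rewrite /y /yres -/V2 -/z /V2 /V3 /v2 /v3 -/U2 -/U3 -/U4; field.
move: hC; rewrite /cube_target -/V2 -/V3.
have [V20|V2n0] := eqVneq V2 0.
  move=> hC; rewrite /z V20 !mul0r subr0 hC; ring.
move=> hC.
have C0 : C != 0.
  apply: contra V2n0 => /eqP C0.
  move: hC; rewrite C0 expr0n /= => /esym/eqP.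
  rewrite mulf_eq0 invr_eq0 pnatr_eq0 orbF addrC subr_eq0 => /eqP sV3.
  have e : 4/27 * V2^+3 = (V3^+2 + 4/27 * V2^+3) - V3^+2 by ring.
  move: e; rewrite -hs sV3 subrr => /eqP; rewrite mulf_eq0 expf_eq0 /=.
  by case/orP=> [|//]; rewrite mulf_eq0 invr_eq0 !pnatr_eq0.
have -> : z^+3 + V2 * z + V3 = ((C^+3)^+2 + V3 * C^+3 - V2^+3/27) / C^+3.
  by rewrite /z; field.
rewrite hC.
have -> : ((- V3 + s) / 2) ^+ 2 + V3 * ((- V3 + s) / 2) - V2 ^+ 3 / 27 =
   (s^+2 - (V3 ^+ 2 + 4/27 * V2 ^+ 3)) / 4 by field.
by rewrite hs subrr !mul0r.
Qed.

Lemma u3C (R : realType) (a4 a3 a2 : R) :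
  u3 (a4%:C)%C (a3%:C)%C (a2%:C)%C = ((u3 a4 a3 a2)%:C)%C.
Proof.
by rewrite /u3; field; rewrite ?pnatr_eq0.
Qed.

Lemma map5 (K S : comNzRingType) (f : {rmorphism K -> S}) (c4 c3 c2 c1 c0 : K) :
  map_poly f (c4%:P*'X^4 + c3%:P*'X^3 + c2%:P*'X^2 + c1%:P*'X + c0%:P) =
  (f c4)%:P*'X^4 + (f c3)%:P*'X^3 + (f c2)%:P*'X^2 + (f c1)%:P*'X + (f c0)%:P.
Proof. rewrite !rmorphD !rmorphM /= !map_polyC !map_polyX; ring. Qed.

Lemma fC'E (R : realType) (a4 a3 a2 a1 a0 : R) :
  map_poly (real_complex R) (deriv (quint a4 a3 a2 a1 a0)) =
  5%:P*'X^4 + (4*(a4%:C)%C)%:P*'X^3 + (3*(a3%:C)%C)%:P*'X^2 + (2*(a2%:C)%C)%:P*'X + ((a1%:C)%C)%:P.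
Proof.
rewrite deriv_quint (@map5 _ _ (real_complex R)). ring.
Qed.

Theorem part12 (R : realType) (a4 a3 a2 a1 a0 : R) :
  let f := quint a4 a3 a2 a1 a0 in
  let A4 := (a4%:C)%C in let A3 := (a3%:C)%C in let A2 := (a2%:C)%C in let A1 := (a1%:C)%C in
  let fC' := map_poly (real_complex R) (deriv f) in
  (u3 a4 a3 a2 = 0 ->
   forall (s : R[i]) (t : bool -> R[i]),
     s ^+ 2 = u2 A4 A3 ^+ 2 - u4 A4 A3 A2 A1 ->
     (forall i2, t i2 ^+ 2 = - u2 A4 A3 + sgb i2 * s) ->
     fC' = 5%:P * \prod_(i1 : bool) \prod_(i2 : bool)
                    ('X - (sgb i1 * t i2 - A4 / 5)%:P)) /\
  (u3 a4 a3 a2 != 0 ->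
   forall (s C w : R[i]) (r : bool -> R[i]),
     s ^+ 2 = v3 A4 A3 A2 A1 ^+ 2 + 4/27 * v2 A4 A3 A2 A1 ^+ 3 ->
     C ^+ 3 = cube_target A4 A3 A2 A1 s ->
     w ^+ 2 = 2 * yres A4 A3 A2 A1 C ->
     (forall i1, r i1 ^+ 2 = - 4 * u2 A4 A3 - 2 * yres A4 A3 A2 A1 C
                              - sgb i1 * (8 * u3 A4 A3 A2 / w)) ->
     fC' = 5%:P * \prod_(i1 : bool) \prod_(i2 : bool)
                    ('X - ((sgb i1 * w + sgb i2 * r i1) / 2 - A4 / 5)%:P)).
Proof.
move=> f A4 A3 A2 A1 fC'.
rewrite /fC' /f fC'E shift_eq; split.
  move=> u30 s t hs ht; rewrite (@prod1 _ (A4/5) _ (u3 A4 A3 A2) _ s t _ hs ht) //.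
  by rewrite /A4 /A3 /A2 u3C u30.
move=> u3n0 s C w r hs hC hw hr.
rewrite (@prod2 _ (A4/5) _ (u3 A4 A3 A2) (u4 A4 A3 A2 A1) _ w r _ _ hw hr) //.
  by rewrite /A4 /A3 /A2 u3C (inj_eq (@complexI _)).
exact: cubic_ok hs hC.
Qed.

Section Gen.
Variable R : rcfType.
Implicit Types p q : {poly R}.

Lemma mu_mup p x : p != 0 -> \mu_x p = mup x p.
Proof.
move=> p0; apply/eqP; rewrite eqn_leq.
rewrite mup_geq // root_mu /=.
by rewrite -root_le_mu // -mup_geq.
Qed.

Lemma mup_deriv p x : p != 0 -> root p x -> mup x p = (mup x p^`()).+1.
Proof.
move=> p0 rx.
have d0 : p^`() != 0.
  apply/negP => /eqP d0.
  have : size p^`() = 0%N by rewrite d0 size_poly0.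
  rewrite size_deriv => /eqP; rewrite -subn1 subn_eq0 => sp.
  move: rx; rewrite [p]size1_polyC // rootC => /eqP c0.
  by move: p0; rewrite [p]size1_polyC // c0 eqxx.
by rewrite -!mu_mup // (mu_deriv_root p0 rx) addn1.
Qed.

Lemma dvd_from_mu p (s : seq R) : p != 0 ->
  (forall y, count_mem y s <= mup y p)%N -> \prod_(x <- s) ('X - x%:P) %| p.
Proof.
elim: s p => [|x s IH] p p0 hc; first by rewrite big_nil dvd1p.
have rx : root p x.
  have := hc x; rewrite /= eqxx add1n => h.
  by rewrite -dvdp_XsubCl XsubC_dvd // (leq_ltn_trans _ h).
have := divpK (d := 'X - x%:P) (p := p); rewrite dvdp_XsubCl rx => /(_ isT) ep.
set q := p %/ ('X - x%:P) in ep.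
have q0 : q != 0 by apply: contra p0 => /eqP q0; rewrite -ep q0 mul0r.
rewrite big_cons -ep mulrC dvdp_mul2r ?polyXsubC_eq0 //.
apply: IH => // y; have := hc y.
rewrite -ep mupM ?polyXsubC_eq0 // /=.
have := mup_XsubCX 1 y x; rewrite expr1 => ->.
by case: (x == y) => /=; rewrite ?add1n ?add0n ?addn1 ?addn0.
Qed.


Fixpoint interl (rs cs : seq R) : Prop :=
  match rs, cs with
  | [:: r], [::] => True
  | r :: ((r' :: _) as rs'), c :: cs' => (r' <= c) /\ (c <= r) /\ interl rs' cs'
  | _, _ => False
  end.

Fixpoint interlS (rs cs : seq R) : Prop :=
  match rs, cs with
  | [:: r], [::] => True
  | r :: ((r' :: _) as rs'), c :: cs' =>
      ((c = r /\ r' = r) \/ (r' < c /\ c < r)) /\ interlS rs' cs'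
  | _, _ => False
  end.

Lemma interl_head rs cs : interl rs cs ->
  (forall x, x \in rs -> x <= head 0 rs) /\ (forall x, x \in cs -> x <= head 0 rs).
Proof.
elim: cs rs => [|c cs IH] [|r [|r' rs]] //=.
  by move=> _; split => // x; rewrite inE => /eqP ->.
move=> [h1 [h2 hi]]; have [/= H1 H2] := IH (r' :: rs) hi; split => x.
  rewrite inE => /orP [/eqP -> //|/H1 h]; exact: le_trans h (le_trans h1 h2).
rewrite inE => /orP [/eqP -> //|/H2 h]; exact: le_trans h (le_trans h1 h2).
Qed.

Lemma interlS_interl rs cs : interlS rs cs -> interl rs cs.
Proof.
elim: cs rs => [|c cs IH] [|r [|r' rs]] //=.
move=> [hc hi]; have h := IH (r' :: rs) hi.
have [h1 h2] : r' <= c /\ c <= r.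
  by case: hc => [[-> ->]|[h1 h2]]; rewrite ?lexx ?ltW.
by [].
Qed.

Lemma countA rs cs y : interl rs cs ->
  (count_mem y rs <= count_mem y cs + ((y <= head 0 rs)%R : bool))%N.
Proof.
elim: cs rs => [|c cs IH] [|r [|r' rs]] //=.
  by move=> _; rewrite addn0; case: eqP => // ->; rewrite lexx.
move=> [h1 [h2 hi]]; have := IH (r' :: rs) hi => /=.
set A := count_mem y rs; set B := count_mem y cs.
have [yr'|r'y] := leP y r'.
  have yc : y <= c by apply: le_trans h1.
  have yr : y <= r by apply: le_trans h2.
  rewrite yr.
  have [ry|ry] := eqVneq r y.
    have -> : c == y by rewrite eq_le yc andbT -ry h2.
    case: (r' == y) => /=; lia.
  case: (r' == y); case: (c == y) => /=; lia.
have [ry|ry] := eqVneq r y.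
  rewrite -ry lexx; case: (r' == y); case: (c == y) => /=; lia.
case: (r' == y); case: (c == y); case: (y <= r)%R => /=; lia.
Qed.

Lemma notin_gt (s : seq R) (b y : R) : (forall x, x \in s -> x <= b) -> b < y -> y \notin s.
Proof. by move=> hs lt; apply/negP => /hs h; move: (lt_le_trans lt h); rewrite ltxx. Qed.

Lemma countB rs cs y : interlS rs cs ->
  (count_mem y cs + (y \in rs) <= count_mem y rs + ((y \notin rs) && (y < head 0 rs)%R))%N.
Proof.
elim: cs rs => [|c cs IH] [|r [|r' rs]] //=.
  by move=> _; rewrite inE eq_sym; case: (r == y).
move=> [hc hi]; have := IH (r' :: rs) hi => /=.
have [H1 H2] := @interl_head (r' :: rs) cs (@interlS_interl (r' :: rs) cs hi); rewrite /= in H1 H2.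
case: hc => [[ecr er'r]|[h1 h2]].
  subst c r'.
  have -> : (y \in [:: r, r & rs]) = (y \in r :: rs) by rewrite in_cons (in_cons r) orbA orbb.
  by case: (r == y); case: (y \in r :: rs); case: (y < r)%R => /=; lia.
have [yr'|r'y] := leP y r'.
  have cy : (c == y) = false.
    by apply/negbTE; rewrite neq_lt (le_lt_trans yr' h1) orbT.
  have ry : (r == y) = false.
    by apply/negbTE; rewrite neq_lt (le_lt_trans yr' (lt_trans h1 h2)) orbT.
  have -> : (y \in [:: r, r' & rs]) = (y \in r' :: rs).
    by rewrite in_cons eq_sym ry.
  rewrite cy ry (le_lt_trans yr' (lt_trans h1 h2)).
  by case: (y \in r' :: rs); case: (y < r')%R => /=; lia.
have n1 : y \notin r' :: rs by apply: notin_gt H1 r'y.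
have n2 : y \notin cs by apply: notin_gt H2 r'y.
have z1 := count_memPn n1; have z2 := count_memPn n2; rewrite /= in z1 z2.
move=> _; have e : (y \in [:: r, r' & rs]) = (y == r) by rewrite in_cons (negPf n1) orbF.
rewrite e.
have [cy|cy] := eqVneq c y.
  subst c; rewrite eq_sym (gt_eqF h2) h2 /=; lia.
rewrite eq_sym; case: (r == y); case: (y < r)%R => /=; lia.
Qed.


Lemma build_cs (p : {poly R}) (rs : seq R) : rs != [::] ->
  sorted (fun x y => y <= x) rs -> all (root p) rs ->
  exists cs, interlS rs cs /\ (forall c, c \in cs -> root p c || root p^`() c).
Proof.
elim: rs => [|r rs IH] // _.
case: rs IH => [|r' rs] IH.
  by move=> _ _; exists [::].
move=> /= /andP[hr' hs] /and3P[pr pr' pa].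
have [cs [hi hc]] := IH isT hs (introT andP (conj pr' pa)).
have [er|nr] := eqVneq r' r.
  exists (r :: cs); split; first by split => //; left.
  by move=> c; rewrite inE => /orP[/eqP ->|/hc //]; rewrite pr.
have lt : r' < r by rewrite lt_neqAle nr hr'.
have [c hcin hc0] := poly_rolle lt (etrans (eqP pr') (esym (eqP pr))).
exists (c :: cs); split.
  by split => //; right; rewrite in_itv /= in hcin; case/andP: hcin.
by move=> c'; rewrite inE => /orP[/eqP ->|/hc //]; rewrite /root hc0 eqxx orbT.
Qed.

Lemma interlS_size rs cs : interlS rs cs -> size cs = (size rs).-1.
Proof.
elim: cs rs => [|c cs IH] [|r [|r' rs]] //= [_ hi].
by rewrite (IH (r' :: rs) hi).
Qed.

Lemma map_prodC (c : R) (s : seq R) :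
  map_poly (real_complex R) (c%:P * \prod_(x <- s) ('X - x%:P)) =
  (c%:C)%C%:P * \prod_(x <- map (real_complex R) s) ('X - x%:P).
Proof.
by rewrite rmorphM /= map_polyC map_prod_XsubC big_map.
Qed.

Lemma roots_prod_nonneg (c : R) (s : seq R) : c != 0 ->
  all_roots_real_nonneg (c%:P * \prod_(x <- s) ('X - x%:P)) <-> (forall x, x \in s -> 0 <= x).
Proof.
move=> c0; rewrite /all_roots_real_nonneg map_prodC; split.
  move=> h x xs; have := h (x%:C)%C.
  rewrite rootM root_prod_XsubC map_f // orbT => /(_ isT) [_].
  by rewrite ler0c.
move=> h z; rewrite rootM rootC (inj_eq (@complexI _)) (negPf c0) /=.
rewrite root_prod_XsubC => /mapP [x xs ->].
have hx : (0 <= (x%:C)%C :> R[i]) by rewrite ler0c h.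
by split => //; apply: ger0_real.
Qed.

Lemma roots_prod_pos (c : R) (s : seq R) : c != 0 ->
  all_roots_real_pos (c%:P * \prod_(x <- s) ('X - x%:P)) <-> (forall x, x \in s -> 0 < x).
Proof.
move=> c0; rewrite /all_roots_real_pos map_prodC; split.
  move=> h x xs; have := h (x%:C)%C.
  rewrite rootM root_prod_XsubC map_f // orbT => /(_ isT) [_].
  by rewrite ltcR.
move=> h z; rewrite rootM rootC (inj_eq (@complexI _)) (negPf c0) /=.
rewrite root_prod_XsubC => /mapP [x xs ->].
have hx : (0 < (x%:C)%C :> R[i]) by rewrite ltcR h.
by split => //; apply: gtr0_real.
Qed.

Lemma real_factor (p : {poly R}) : p \is monic ->
  all_roots_real_nonneg p ->
  exists s : seq R, p = \prod_(x <- s) ('X - x%:P) /\ (forall x, x \in s -> 0 <= x).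
Proof.
move=> mp hp.
have [zs ezs] := closed_field_poly_normal (map_poly (real_complex R) p).
have lc : lead_coef (map_poly (real_complex R) p) = 1.
  by rewrite lead_coef_map (monicP mp) rmorph1.
rewrite lc scale1r in ezs.
have hz : forall z, z \in zs -> z = ((complex.Re z)%:C)%C /\ 0 <= complex.Re z.
  move=> z zin; have : root (map_poly (real_complex R) p) z.
    by rewrite ezs root_prod_XsubC.
  move=> /hp [_]; case: z {zin} => a b; rewrite lecE /= => /andP[/eqP b0 ha].
  by rewrite b0.
exists (map (@complex.Re R) zs); split; last first.
  by move=> x /mapP [z zin ->]; case: (hz z zin).
apply: (@map_poly_inj _ _ (real_complex R)).
rewrite ezs map_prod_XsubC big_map; apply: eq_big_seq => z zin.
by case: (hz z zin) => [e _]; rewrite {1}e.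
Qed.



Lemma quint_size_monic (a4 a3 a2 a1 a0 : R) :
  quint a4 a3 a2 a1 a0 \is monic /\ size (quint a4 a3 a2 a1 a0) = 6%N.
Proof.
pose q : {poly R} := a4 *: 'X^4 + a3 *: 'X^3 + a2 *: 'X^2 + a1 *: 'X + a0%:P.
have hq : (size q <= 5)%N.
  have hs (c : R) k : (k <= 4)%N -> (size (c *: 'X^k) <= 5)%N.
    by move=> hk; apply: leq_trans (size_scale_leq _ _) _; rewrite size_polyXn.
  rewrite /q; repeat (apply: leq_trans (size_add _ _) _; rewrite geq_max; apply/andP; split).
  - exact: hs.
  - exact: hs.
  - exact: hs.
  - by have := hs a1 1%N isT; rewrite expr1.
  - by apply: leq_trans (size_polyC_leq1 a0) _.
have e : quint a4 a3 a2 a1 a0 = 'X^5 + q by rewrite /quint /q !addrA.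
have lt : (size q < size ('X^5 : {poly R}))%N by rewrite size_polyXn ltnS.
rewrite e; split.
  by rewrite monicE lead_coefDl // lead_coefXn.
by rewrite size_addl // size_polyXn.
Qed.

Lemma mup_cprod (c : R) (s : seq R) y : c != 0 ->
  mup y (c%:P * \prod_(x <- s) ('X - x%:P)) = count_mem y s.
Proof.
move=> c0; rewrite mupM ?polyC_eq0 ?monic_neq0 ?monic_prod_XsubC //.
by rewrite mupNroot ?rootC // mu_prod_XsubC.
Qed.

Lemma prod_eq_of_dvd (p : {poly R}) (s : seq R) : p \is monic -> size p = (size s).+1 ->
  \prod_(x <- s) ('X - x%:P) %| p -> p = \prod_(x <- s) ('X - x%:P).
Proof.
move=> mp sp hd; apply/eqP; rewrite eq_sym -eqp_monic ?monic_prod_XsubC //.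
by rewrite -dvdp_size_eqp // size_prod_XsubC sp.
Qed.



Lemma eval5 (r1 r2 r3 r4 r5 x : R) :
  (\prod_(y <- [:: r1; r2; r3; r4; r5]) ('X - y%:P)).[x] =
  (x - r1) * ((x - r2) * ((x - r3) * ((x - r4) * ((x - r5) * 1)))).
Proof. by rewrite horner_prod !big_cons big_nil !hornerXsubC. Qed.

Lemma backward (p : {poly R}) (b1 b2 b3 b4 : R) :
  p \is monic -> size p = 6%N ->
  p^`() = 5%:P * \prod_(x <- [:: b1; b2; b3; b4]) ('X - x%:P) ->
  b4 <= b3 -> b3 <= b2 -> b2 <= b1 ->
  p.[b1] <= 0 -> 0 <= p.[b2] -> p.[b3] <= 0 -> 0 <= p.[b4] -> 0 <= b4 -> p.[0] <= 0 ->
  exists s : seq R, p = \prod_(x <- s) ('X - x%:P) /\ (forall x, x \in s -> 0 <= x).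
Proof.
move=> mp sp hd h43 h32 h21 s1 s2 s3 s4 b40 s0.
have p0 : p != 0 by apply: monic_neq0.
have lp : 0 < lead_coef p by rewrite (monicP mp) ltr01.
have [n hn] := poly_pinfty_gt_lc lp.
set M := Num.max b1 n.
have hM : 0 <= p.[M].
  apply: le_trans (hn M _); first by rewrite (monicP mp) ler01.
  by rewrite /M le_max lexx orbT.
have hb1M : b1 <= M by rewrite /M le_max lexx.
have [r1 hr1 rr1] := polyrcf.poly_ivt hb1M (mulr_le0_ge0 s1 hM).
have [r2 hr2 rr2] := polyrcf.poly_ivt h21 (mulr_ge0_le0 s2 s1).
have [r3 hr3 rr3] := polyrcf.poly_ivt h32 (mulr_le0_ge0 s3 s2).
have [r4 hr4 rr4] := polyrcf.poly_ivt h43 (mulr_ge0_le0 s4 s3).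
have [r5 hr5 rr5] := polyrcf.poly_ivt b40 (mulr_le0_ge0 s0 s4).
rewrite !in_itv /= in hr1 hr2 hr3 hr4 hr5.
case/andP: hr1 => [l1 u1]; case/andP: hr2 => [l2 u2]; case/andP: hr3 => [l3 u3].
case/andP: hr4 => [l4 u4]; case/andP: hr5 => [l5 u5].
set rs := [:: r1; r2; r3; r4; r5].
have hi : interl rs [:: b1; b2; b3; b4] by rewrite /=; do ! split => //.
have hroot0 : all (root p) rs by rewrite /= rr1 rr2 rr3 rr4 rr5.
have hroot : forall y, y \in rs -> root p y by move=> y; apply: (allP hroot0).
exists rs; split.
  apply: prod_eq_of_dvd mp _ _; first by rewrite sp.
  apply: (@dvd_from_mu p rs p0) => y.
  have [ry|nry] := boolP (root p y).
    rewrite (@mup_deriv p y p0 ry) hd mup_cprod; last by rewrite pnatr_eq0.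
    apply: leq_trans (@countA rs _ y hi) _.
    by rewrite -addn1 leq_add2l leq_b1.
  have : y \notin rs by apply: contra nry; apply: hroot.
  by move/count_memPn => ->.
have hnn : all (fun x => 0 <= x) rs.
  by rewrite /= !andbT; apply/and5P; split; lra.
by move=> x; apply: (allP hnn).
Qed.

Lemma sg1 (d1 d2 d3 d4 d5 : R) : d1 <= 0 -> 0 <= d2 -> 0 <= d3 -> 0 <= d4 -> 0 <= d5 ->
  d1 * (d2 * (d3 * (d4 * (d5 * 1)))) <= 0.
Proof.
move=> h1 h2 h3 h4 h5; apply: mulr_le0_ge0 => //.
by do 3 (apply: mulr_ge0 => //); rewrite mulr1.
Qed.
Lemma sg2 (d1 d2 d3 d4 d5 : R) : d1 <= 0 -> d2 <= 0 -> 0 <= d3 -> 0 <= d4 -> 0 <= d5 ->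
  0 <= d1 * (d2 * (d3 * (d4 * (d5 * 1)))).
Proof.
move=> h1 h2 h3 h4 h5; apply: mulr_le0 => //; apply: mulr_le0_ge0 => //.
by do 2 (apply: mulr_ge0 => //); rewrite mulr1.
Qed.
Lemma sg3 (d1 d2 d3 d4 d5 : R) : d1 <= 0 -> d2 <= 0 -> d3 <= 0 -> 0 <= d4 -> 0 <= d5 ->
  d1 * (d2 * (d3 * (d4 * (d5 * 1)))) <= 0.
Proof.
move=> h1 h2 h3 h4 h5; apply: mulr_le0_ge0 => //; apply: mulr_le0 => //.
apply: mulr_le0_ge0 => //; apply: mulr_ge0 => //; by rewrite mulr1.
Qed.
Lemma sg4 (d1 d2 d3 d4 d5 : R) : d1 <= 0 -> d2 <= 0 -> d3 <= 0 -> d4 <= 0 -> 0 <= d5 ->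
  0 <= d1 * (d2 * (d3 * (d4 * (d5 * 1)))).
Proof.
move=> h1 h2 h3 h4 h5; apply: mulr_le0 => //; apply: mulr_le0_ge0 => //.
apply: mulr_le0 => //; apply: mulr_le0_ge0 => //; by rewrite mulr1.
Qed.
Lemma sg5 (d1 d2 d3 d4 d5 : R) : d1 <= 0 -> d2 <= 0 -> d3 <= 0 -> d4 <= 0 -> d5 <= 0 ->
  d1 * (d2 * (d3 * (d4 * (d5 * 1)))) <= 0.
Proof.
move=> h1 h2 h3 h4 h5; apply: mulr_le0_ge0 => //; apply: mulr_le0 => //.
apply: mulr_le0_ge0 => //; apply: mulr_le0 => //; by rewrite mulr1.
Qed.

Lemma forward (p : {poly R}) (s : seq R) (b1 b2 b3 b4 : R) :
  p = \prod_(x <- s) ('X - x%:P) -> (forall x, x \in s -> 0 <= x) -> size p = 6%N ->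
  p^`() = 5%:P * \prod_(x <- [:: b1; b2; b3; b4]) ('X - x%:P) ->
  b4 <= b3 -> b3 <= b2 -> b2 <= b1 ->
  [/\ p.[b1] <= 0, 0 <= p.[b2], p.[b3] <= 0, 0 <= p.[b4] & ((exists2 r, r \in s & r <= b4) /\ p.[0] <= 0)].
Proof.
move=> ps s0 sp hd h43 h32 h21.
have p0 : p != 0 by rewrite ps monic_neq0 // monic_prod_XsubC.
set ge := fun x y : R => y <= x.
have tot : total ge by move=> x y; exact: le_total.
have anti : antisymmetric ge by move=> x y /andP[a b]; apply: le_anti; rewrite /ge in a b; rewrite a b.
have ep : p = \prod_(x <- sort ge s) ('X - x%:P).
  by rewrite ps; apply: perm_big; rewrite perm_sym perm_sort.
have srt : sorted ge (sort ge s) by apply: sort_sorted.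
have hnn : forall x, x \in sort ge s -> 0 <= x by move=> x; rewrite mem_sort; apply: s0.
have ssz : size (sort ge s) = 5%N.
  by move: sp; rewrite ep size_prod_XsubC => -[].
have hin : forall x, x \in sort ge s -> x \in s by move=> x; rewrite mem_sort.
move: ep srt hnn ssz hin; case: (sort ge s) => [|r1 [|r2 [|r3 [|r4 [|r5 [|? ?]]]]]] //.
move=> ep srt hnn _ hin.
have hroot : all (root p) [:: r1; r2; r3; r4; r5].
  by apply/allP => y yin; rewrite ep root_prod_XsubC.
have [cs [hi hc]] := @build_cs p [:: r1; r2; r3; r4; r5] isT srt hroot.
have d0 : p^`() != 0 by rewrite hd mulf_neq0 ?polyC_eq0 ?pnatr_eq0 // monic_neq0 // monic_prod_XsubC.
have dvd : \prod_(c <- cs) ('X - c%:P) %| p^`().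
  apply: (@dvd_from_mu _ cs d0) => y.
  have hB := @countB _ cs y hi.
  have [ry|nry] := boolP (root p y).
    have yin : y \in [:: r1; r2; r3; r4; r5] by move: ry; rewrite ep root_prod_XsubC.
    have := @mup_deriv p y p0 ry; rewrite {1}ep mu_prod_XsubC => e.
    move: hB; rewrite yin e /= addn1 addn0 ltnS.
    done.
  have yn : y \notin [:: r1; r2; r3; r4; r5] by move: nry; rewrite ep root_prod_XsubC.
  move: hB; rewrite (negPf yn) (count_memPn yn) addn0 add0n => hB.
  have [cy|cy] := boolP (y \in cs).
    have := hc y cy; rewrite (negPf nry) /= => rd.
    have m1 : (1 <= mup y p^`())%N by rewrite mup_geq // expr1 dvdp_XsubCl.
    exact: leq_trans hB (leq_trans (leq_b1 _) m1).
  by rewrite (count_memPn cy).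
have csz := @interlS_size _ _ hi.
have hi' := @interlS_interl _ _ hi.
move: hi hi' hc dvd csz; case: cs => [|c1 [|c2 [|c3 [|c4 [|? ?]]]]] // hi hi' hc dvd _.
have dvd' : \prod_(c <- [:: c1; c2; c3; c4]) ('X - c%:P) %| \prod_(x <- [:: b1; b2; b3; b4]) ('X - x%:P).
  by move: dvd; rewrite hd mul_polyC dvdpZr // pnatr_eq0.
have eqb := @prod_eq_of_dvd (\prod_(x <- [:: b1; b2; b3; b4]) ('X - x%:P)) [:: c1; c2; c3; c4] (monic_prod_XsubC _ _ _) (size_prod_XsubC _ _) dvd'.
have perm := prod_XsubC_eq (esym eqb).
move: hi' => /= [g1 [l1 [g2 [l2 [g3 [l3 [g4 [l4 _]]]]]]]].
have srtc : sorted ge [:: c1; c2; c3; c4].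
  by rewrite /= /ge (le_trans l2 g1) (le_trans l3 g2) (le_trans l4 g3).
have srtb : sorted ge [:: b1; b2; b3; b4] by rewrite /= /ge h21 h32 h43.
have tr : transitive ge by move=> y x z; rewrite /ge => a b; exact: le_trans b a.
have := sorted_eq tr anti srtc srtb perm => -[e1 e2 e3 e4]; subst c1 c2 c3 c4.
have r50 : 0 <= r5 by apply: hnn; rewrite !inE eqxx !orbT.
rewrite ep !eval5.
have hr5 : r5 \in s by apply: hin; rewrite !inE eqxx !orbT.
split.
- apply: sg1; lra.
- apply: sg2; lra.
- apply: sg3; lra.
- apply: sg4; lra.
- split; first by exists r5.
  apply: sg5; lra.
Qed.

End Gen.

Theorem proposition3p6 (R : realType) (a4 a3 a2 a1 a0 : R) :
  let f := quint a4 a3 a2 a1 a0 in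
  let A4 := (a4%:C)%C in let A3 := (a3%:C)%C in let A2 := (a2%:C)%C in let A1 := (a1%:C)%C in
  let fC' := map_poly (real_complex R) (deriv f) in
  (* case u3 = 0: any choice of square roots s, t *)
  (u3 a4 a3 a2 = 0 ->
   forall (s : R[i]) (t : bool -> R[i]),
     s ^+ 2 = u2 A4 A3 ^+ 2 - u4 A4 A3 A2 A1 ->
     (forall i2, t i2 ^+ 2 = - u2 A4 A3 + sgb i2 * s) ->
     fC' = 5%:P * \prod_(i1 : bool) \prod_(i2 : bool)
                    ('X - (sgb i1 * t i2 - A4 / 5)%:P)) /\
  (* case u3 <> 0: any choice of square/cube roots s, C, w, r *)
  (u3 a4 a3 a2 != 0 ->
   forall (s C w : R[i]) (r : bool -> R[i]),
     s ^+ 2 = v3 A4 A3 A2 A1 ^+ 2 + 4/27 * v2 A4 A3 A2 A1 ^+ 3 ->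
     C ^+ 3 = cube_target A4 A3 A2 A1 s ->
     w ^+ 2 = 2 * yres A4 A3 A2 A1 C ->
     (forall i1, r i1 ^+ 2 = - 4 * u2 A4 A3 - 2 * yres A4 A3 A2 A1 C
                              - sgb i1 * (8 * u3 A4 A3 A2 / w)) ->
     fC' = 5%:P * \prod_(i1 : bool) \prod_(i2 : bool)
                    ('X - ((sgb i1 * w + sgb i2 * r i1) / 2 - A4 / 5)%:P)) /\
  (* the roots of f' being real, sorted b4 <= b3 <= b2 <= b1 *)
  (forall b1 b2 b3 b4 : R,
     b4 <= b3 -> b3 <= b2 -> b2 <= b1 ->
     deriv f = 5%:P * (('X - b1%:P) * ('X - b2%:P) * ('X - b3%:P) * ('X - b4%:P)) ->
     let lam1 := Num.max (Fq a4 a3 a2 a1 b1) (Fq a4 a3 a2 a1 b3) in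
     let lam2 := Num.min (Fq a4 a3 a2 a1 b2) (Fq a4 a3 a2 a1 b4) in
     let dagger := - lam2 <= a0 <= - lam1 in
     (all_roots_real_nonneg f <->
        [/\ all_roots_real_nonneg (deriv f), a0 <= 0 & dagger]) /\
     (all_roots_real_pos f <->
        [/\ all_roots_real_pos (deriv f), a0 < 0 & dagger])).
Proof.
move=> f A4 A3 A2 A1 fC'.
have [P1 P2] := @part12 R a4 a3 a2 a1 a0.
split; first exact: P1.
split; first exact: P2.
move=> b1 b2 b3 b4 h43 h32 h21 hd0 lam1 lam2 dagger.
have [mf sf] := @quint_size_monic _ a4 a3 a2 a1 a0.
rewrite -/f in mf sf.
have hd : deriv f = 5%:P * \prod_(x <- [:: b1; b2; b3; b4]) ('X - x%:P).
  by rewrite hd0 !big_cons big_nil mulr1 !mulrA.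
have hf : forall x, f.[x] = Fq a4 a3 a2 a1 x + a0.
  by move=> x; rewrite /f /quint /Fq !hornerE.
have f0 : f.[0] = a0 by rewrite hf /Fq expr0n /=; ring.
have Edag : dagger <-> [/\ f.[b1] <= 0, 0 <= f.[b2], f.[b3] <= 0 & 0 <= f.[b4]].
  rewrite /dagger /lam1 /lam2 !hf; split.
    case/andP; rewrite lerNl le_min lerNr ge_max => /andP[h1 h2] /andP[h3 h4].
    split; lra.
  case=> h1 h2 h3 h4; apply/andP; split.
    rewrite lerNl le_min; apply/andP; split; lra.
  rewrite lerNr ge_max; apply/andP; split; lra.
have inb : forall x, x \in [:: b1; b2; b3; b4] -> b4 <= x.
  move=> x; rewrite !inE => /orP[/eqP->|/orP[/eqP->|/orP[/eqP->|/eqP->]]]; lra.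
have b4in : b4 \in [:: b1; b2; b3; b4] by rewrite !inE eqxx !orbT.
have n5 : (5 : R) != 0 by rewrite pnatr_eq0.
have Enn : all_roots_real_nonneg (deriv f) <-> 0 <= b4.
  rewrite hd roots_prod_nonneg //; split; first by move=> h; apply: h.
  by move=> h x /inb; apply: le_trans.
have Epos : all_roots_real_pos (deriv f) <-> 0 < b4.
  rewrite hd roots_prod_pos //; split; first by move=> h; apply: h.
  by move=> h x /inb; apply: lt_le_trans.
have fE : forall s : seq R, f = \prod_(x <- s) ('X - x%:P) ->
    f = 1%:P * \prod_(x <- s) ('X - x%:P) by move=> s ->; rewrite polyC1 mul1r.
split.
  split.
    move=> hnn.
    have [s [fs s0]] := @real_factor _ f mf hnn.
    have [g1 g2 g3 g4 [[r rs rb4] g0]] := @forward _ f s b1 b2 b3 b4 fs s0 sf hd h43 h32 h21.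
    split.
    - by apply/Enn; apply: le_trans rb4; apply: s0.
    - by rewrite -f0.
    - by apply/Edag.
  case=> /Enn hb4 ha0 /Edag [g1 g2 g3 g4].
  have f0le : f.[0] <= 0 by rewrite f0.
  have [s [fs s0]] := @backward _ f b1 b2 b3 b4 mf sf hd h43 h32 h21 g1 g2 g3 g4 hb4 f0le.
  by rewrite (fE s fs); apply/roots_prod_nonneg => //; rewrite oner_eq0.
split.
  move=> hpos.
  have hnn : all_roots_real_nonneg f.
    by move=> z /hpos [hr hz]; split => //; apply: ltW.
  have [s [fs s0]] := @real_factor _ f mf hnn.
  have sp : forall x, x \in s -> 0 < x.
    by apply/(@roots_prod_pos _ 1 s (oner_neq0 _)); rewrite -(fE s fs).
  have [g1 g2 g3 g4 [[r rs rb4] g0]] := @forward _ f s b1 b2 b3 b4 fs s0 sf hd h43 h32 h21.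
  split.
  - by apply/Epos; apply: lt_le_trans rb4; apply: sp.
  - rewrite -f0 lt_neqAle g0 andbT.
    apply/negP => /eqP rf0.
    have : root f 0 by rewrite /root rf0.
    rewrite fs root_prod_XsubC => /sp; rewrite ltxx.
    done.
  - by apply/Edag.
case=> /Epos hb4 ha0 /Edag [g1 g2 g3 g4].
have f0le : f.[0] <= 0 by rewrite f0 ltW.
have [s [fs s0]] := @backward _ f b1 b2 b3 b4 mf sf hd h43 h32 h21 g1 g2 g3 g4 (ltW hb4) f0le.
rewrite (fE s fs); apply/roots_prod_pos; first by rewrite oner_eq0.
move=> x xs; rewrite lt_neqAle s0 // andbT; apply/negP => /eqP x0.
have : root f x by rewrite fs root_prod_XsubC.
by rewrite -x0 /root f0 (lt_eqF ha0).
Qed.
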